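(* Let $\kappa$ be a regular infinite cardinal and $\mu$ a singular cardinal with $\mathrm{cf}(\mu)=\kappa$. (1) If $\lambda$ is a cardinal with $\lambda<2^\lambda<\mu$, then $\lambda<\mathrm{non}(\mathcal M_\kappa({}^{\mu}2,\kappa))$. Consequently, if $\mu$ is a strong limit cardinal, then $\mu^+\le\mathrm{non}(\mathcal M_\kappa({}^{\mu}2,\kappa))$. (2) If $\lambda$ is a regular cardinal with $\kappa<\lambda<\mu\le 2^\lambda$ and there exists a ${<}\kappa^+$-independent family $\mathcal X\subseteq[\lambda]^\lambda$ of cardinality $\mu$, then $\mathrm{non}(\mathcal M_\kappa({}^{\mu}2,\kappa))\le\lambda$.
   Context: For ordinals $\delta,\rho$, ${}^{\delta}\rho$ is the set of functions $\delta\to\rho$; for a partial function $s\colon\delta\rightharpoonup\rho$, $[s]=\{f\in{}^{\delta}\rho: s\subseteq f\}$. The ${<}\kappa$-box topology on ${}^{\delta}\rho$ has base $\{[s]: |\mathrm{dom}(s)|<\kappa\}$; $(X,\kappa)$ denotes $X$ with it. A set is $\kappa$-meagre if it is a union of at most $\kappa$ nowhere dense sets; $\mathcal M_\kappa(X,\tau)$ is the ideal of $\kappa$-meagre subsets; $\mathrm{non}(\mathcal I)$ is the least size of a subset of the space not in $\mathcal I$. For a regular cardinal $\lambda$, a family $\mathcal X\subseteq[\lambda]^\lambda$ is ${<}\nu$-independent if for all disjoint $A,B\in[\mathcal X]^{<\nu}$ we have $|\bigcap A\setminus\bigcup B|=\lambda$. *)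

(* Defs.v *)
(* Cardinals are represented by types (up to bijection);
   cardinal comparisons by injections/bijections (choice is available). *)
From Stdlib Require Import Classical.

Definition set (T : Type) := T -> Prop.

Definition le_card (A B : Type) : Prop :=
  exists f : A -> B, forall x y, f x = f y -> x = y.
Definition lt_card (A B : Type) : Prop := le_card A B /\ ~ le_card B A.
Definition eq_card (A B : Type) : Prop :=
  exists f : A -> B, (forall x y, f x = f y -> x = y) /\ (forall b, exists a, f a = b).

Definition sub {T : Type} (S : set T) : Type := {x : T | S x}.

Definition infinite_card (A : Type) : Prop := le_card nat A.

(* cf(|M|) = |K|  (for infinite M): |K| is the least cardinality of an index
   set I such that M is a union of I-many subsets each of size < |M|. *)
Definition covered_by_small (M I : Type) : Prop :=
  exists F : I -> set M,
    (forall i, lt_card (sub (F i)) M) /\ (forall x : M, exists i, F i x).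

Definition cof_eq (M K : Type) : Prop :=
  covered_by_small M K /\ (forall I : Type, lt_card I K -> ~ covered_by_small M I).

Definition regular_card (K : Type) : Prop := infinite_card K /\ cof_eq K K.

Definition strong_limit (M : Type) : Prop :=
  forall L : Type, lt_card L M -> lt_card (L -> bool) M.

(* The <kappa-box topology on ^M 2 (kappa = |K|): basic open sets are
   [s] = {f | s ⊆ f} for partial functions s with |dom s| < kappa. *)
Definition box_open (K M : Type) (U : set (M -> bool)) : Prop :=
  forall f, U f -> exists D : set M, lt_card (sub D) K /\
    (forall g : M -> bool, (forall x, D x -> g x = f x) -> U g).

Definition box_closure (K M : Type) (N : set (M -> bool)) : set (M -> bool) :=
  fun f => forall U, box_open K M U -> U f -> exists g, U g /\ N g.

Definition box_nowhere_dense (K M : Type) (N : set (M -> bool)) : Prop :=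
  forall U, box_open K M U -> (forall f, U f -> box_closure K M N f) ->
    forall f, ~ U f.

Definition kappa_meagre (K M : Type) (A : set (M -> bool)) : Prop :=
  exists (I : Type) (N : I -> set (M -> bool)), le_card I K /\
    (forall i, box_nowhere_dense K M (N i)) /\
    (forall f, A f <-> exists i, N i f).

(* lambda < non(M_kappa(^mu 2, kappa)):
   every subset of size <= lambda is kappa-meagre *)
Definition lt_non (K M L : Type) : Prop :=
  forall S : set (M -> bool), le_card (sub S) L -> kappa_meagre K M S.

(* non(M_kappa(^mu 2, kappa)) <= lambda:
   some subset of size <= lambda is not kappa-meagre *)
Definition non_le (K M L : Type) : Prop :=
  exists S : set (M -> bool), le_card (sub S) L /\ ~ kappa_meagre K M S.

(* <nu-independence with nu = kappa^+ : for all disjoint A, B ⊆ X of size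
   <= kappa (i.e. < kappa^+), |∩A \ ∪B| = lambda.  ∩∅ = lambda. *)
Definition independent_le (K L : Type) (X : set (set L)) : Prop :=
  forall A B : set (set L),
    (forall Y, A Y -> X Y) -> (forall Y, B Y -> X Y) ->
    (forall Y, A Y -> B Y -> False) ->
    le_card (sub A) K -> le_card (sub B) K ->
    eq_card (sub (fun x : L => (forall Y, A Y -> Y x) /\ ~ (exists Y, B Y /\ Y x))) L.

(* Main.v *)
Require Import Defs.
From Stdlib Require Import Classical ClassicalEpsilon FunctionalExtensionality ProofIrrelevance PropExtensionality.
From mathcomp Require ssreflect ssrfun ssrbool eqtype seq boolp wochoice.
Module WO.
Import ssreflect ssrfun ssrbool eqtype seq boolp wochoice.
Lemma wo_exists (T : Type) : exists lt : T -> T -> Prop,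
  well_founded lt /\ (forall x y, x <> y -> lt x y \/ lt y x) /\
  (forall x y z, lt x y -> lt y z -> lt x z) /\ (forall x, ~ lt x x).
Proof.
pose T' := {classic T}.
have [R wR] := well_ordering_principle T'.
have wc : wo_chain R (fun _ => true).
  by move=> A _; apply: wR.
have Rtot := wo_chainW wc.
have Rref := wo_chain_reflexive wc.
have Ranti := wo_chain_antisymmetric wc.
have Rtr : forall x y z : T', R x y -> R y z -> R x z.
  move=> x y z Rxy Ryz.
  have ne : nonempty [mem [:: x; y; z]] by exists x; rewrite inE eqxx.
  have [m [[] mA lb] _] := wR _ ne.
  move: mA lb; rewrite !inE => /or3P [] /eqP -> lb.
  - by apply: lb; rewrite !inE eqxx !orbT.
  - have Ryx : R y x by apply: lb; rewrite !inE eqxx.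
    by have -> : x = y by apply: Ranti => //; rewrite Rxy Ryx.
  - have Rzy : R z y by apply: lb; rewrite !inE eqxx !orbT.
    by have <- : y = z by apply: Ranti => //; rewrite Ryz Rzy.
exists (fun x y : T => R x y /\ x <> y); split; last split; last split.
- move=> x; apply: NNPP => nAx.
  pose A : pred T' := fun w => `[< ~ Acc (fun x y : T => R x y /\ x <> y) w >].
  have ne : nonempty A by exists x; rewrite /A unfold_in; apply/asboolP.
  have [m [[] mA lb] _] := wR _ ne.
  move: mA; rewrite /A unfold_in => /asboolP; apply; constructor => y [Rym nym].
  apply: NNPP => nAy.
  have Rmy : R m y by apply: lb; rewrite /A unfold_in; apply/asboolP.
  by apply: nym; apply: Ranti => //; rewrite Rym Rmy.
- move=> x y nxy.
  have : R x y || R y x by apply: Rtot.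
  case/orP => H; [left|right]; split => //.
  by move=> e; apply: nxy.
- move=> x y z [Rxy nxy] [Ryz nyz]; split; first exact: Rtr Rxy Ryz.
  move=> exz; subst z; apply: nxy; apply: Ranti => //; by rewrite Rxy Ryz.
- by move=> x [_ h].
Qed.
End WO.
Import WO.

Definition dec (P : Prop) : bool := if excluded_middle_informative P then true else false.
Lemma dec_true (P : Prop) : dec P = true <-> P.
Proof. unfold dec; destruct (excluded_middle_informative P); split; intros; auto; try discriminate; contradiction. Qed.
Lemma dec_false (P : Prop) : dec P = false <-> ~ P.
Proof. unfold dec; destruct (excluded_middle_informative P); split; intros; auto; try discriminate; contradiction. Qed.
Lemma decT (P : Prop) : dec P = true -> P. Proof. apply dec_true. Qed.
Lemma Tdec (P : Prop) : P -> dec P = true. Proof. apply dec_true. Qed.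
Lemma decF (P : Prop) : dec P = false -> ~ P. Proof. apply dec_false. Qed.
Lemma Fdec (P : Prop) : ~ P -> dec P = false. Proof. apply dec_false. Qed.

Lemma proj_inj {T : Type} (P : T -> Prop) (x y : sub P) : proj1_sig x = proj1_sig y -> x = y.
Proof. destruct x as [x px], y as [y py]; simpl; intros; subst; f_equal; apply proof_irrelevance. Qed.

Lemma le_refl A : le_card A A.
Proof. exists (fun x => x); auto. Qed.
Lemma le_trans A B C : le_card A B -> le_card B C -> le_card A C.
Proof. intros [f hf] [g hg]; exists (fun x => g (f x)); auto. Qed.
Lemma lt_le_trans A B M : le_card A B -> lt_card B M -> lt_card A M.
Proof. intros HAB [HBM nMB]; split. eapply le_trans; eauto. intro H; apply nMB; eapply le_trans; eauto. Qed.

Lemma le_of_rel A B (R : A -> B -> Prop) : (forall a, exists b, R a b) ->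
  (forall a a' b, R a b -> R a' b -> a = a') -> le_card A B.
Proof.
  intros Ht Hi. exists (fun a => proj1_sig (constructive_indefinite_description _ (Ht a))).
  intros x y E. destruct (constructive_indefinite_description _ (Ht x)) as [bx Hx].
  destruct (constructive_indefinite_description _ (Ht y)) as [by' Hy]. simpl in E. subst. eauto.
Qed.

Lemma no_nat_bool : ~ le_card nat bool.
Proof.
  intros [f hf]. assert (H01 := hf 0 1). assert (H02 := hf 0 2). assert (H12 := hf 1 2).
  destruct (f 0), (f 1), (f 2); try discriminate (H01 eq_refl); try discriminate (H02 eq_refl);
  try discriminate (H12 eq_refl).
Qed.

Lemma lt_of_le_bool A K : infinite_card K -> le_card A bool -> lt_card A K.
Proof.
  intros HK HA. split.
  - eapply le_trans. exact HA. eapply le_trans; [|exact HK].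
    exists (fun b : bool => if b then 1 else 0). intros [] []; simpl; congruence.
  - intro H. apply no_nat_bool. eapply le_trans. exact HK. eapply le_trans; eauto.
Qed.

Lemma pow_mono A B : le_card A B -> le_card (A -> bool) (B -> bool).
Proof.
  intros [f hf]. exists (fun psi b => dec (exists a, f a = b /\ psi a = true)).
  intros p q E. extensionality a. assert (E1 := equal_f E (f a)). simpl in E1.
  destruct (p a) eqn:Hp; destruct (q a) eqn:Hq; auto.
  - assert (dec (exists a', f a' = f a /\ p a' = true) = true) by (apply Tdec; eauto).
    rewrite E1 in H. apply decT in H. destruct H as [a' [Ha' Hq']].
    apply hf in Ha'. subst. congruence.
  - assert (dec (exists a', f a' = f a /\ q a' = true) = true) by (apply Tdec; eauto).
    rewrite <- E1 in H. apply decT in H. destruct H as [a' [Ha' Hp']].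
    apply hf in Ha'. subst. congruence.
Qed.

Lemma opt_inf A : le_card nat A -> le_card (option A) A.
Proof.
  intros [e he].
  apply le_of_rel with (R := fun o a => match o with
     | None => a = e 0
     | Some x => ((exists n, e n = x) -> exists n, e n = x /\ a = e (S n)) /\
                 (~ (exists n, e n = x) -> a = x) end).
  - intros [x|]; [|eauto]. destruct (classic (exists n, e n = x)) as [[n Hn]|Hn].
    + exists (e (S n)). split; [|intro H; contradiction (H (ex_intro _ n Hn))].
      intros _; exists n; auto.
    + exists x. split; auto. intro H; contradiction.
  - intros [x|] [y|] b Hx Hy.
    + destruct Hx as [Hx1 Hx2], Hy as [Hy1 Hy2].
      destruct (classic (exists n, e n = x)) as [Ex|Ex]; destruct (classic (exists n, e n = y)) as [Ey|Ey].
      * destruct (Hx1 Ex) as [n [Hn Hb]]. destruct (Hy1 Ey) as [m [Hm Hb']].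
        assert (E : e (S n) = e (S m)) by congruence. apply he in E. injection E; intros; subst; f_equal; congruence.
      * destruct (Hx1 Ex) as [n [Hn Hb]]. assert (y = e (S n)) by (rewrite <- (Hy2 Ey); congruence). contradiction Ey; eauto.
      * destruct (Hy1 Ey) as [n [Hn Hb]]. assert (x = e (S n)) by (rewrite <- (Hx2 Ex); congruence). contradiction Ex; eauto.
      * f_equal. rewrite <- (Hx2 Ex). rewrite <- (Hy2 Ey). reflexivity.
    + destruct Hx as [Hx1 Hx2]. subst b.
      destruct (classic (exists n, e n = x)) as [Ex|Ex].
      * destruct (Hx1 Ex) as [n [Hn Hb]]. symmetry in Hb. apply he in Hb. discriminate.
      * contradiction Ex. exists 0. rewrite <- (Hx2 Ex). auto.
    + destruct Hy as [Hy1 Hy2]. subst b.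
      destruct (classic (exists n, e n = y)) as [Ey|Ey].
      * destruct (Hy1 Ey) as [n [Hn Hb]]. apply he in Hb. discriminate.
      * contradiction Ey. exists 0. rewrite <- (Hy2 Ey). auto.
    + auto.
Qed.

Lemma sum_mono A A' B B' : le_card A A' -> le_card B B' -> le_card (A + B) (A' + B').
Proof.
  intros [f hf] [g hg]. exists (fun s => match s with inl a => inl (f a) | inr b => inr (g b) end).
  intros [a|b] [a'|b'] E; try discriminate; injection E; intros; f_equal; auto.
Qed.

Lemma sum_pow A : le_card nat A -> le_card (A + A) (A -> bool).
Proof.
  intros [e he].
  assert (three : forall x y : A, exists z, z <> x /\ z <> y).
  { intros x y. apply NNPP; intro H. apply no_nat_bool.
    exists (fun n => dec (e n = x)). intros n m E.
    destruct (classic (e n = x)) as [Hn|Hn]; destruct (classic (e m = x)) as [Hm|Hm].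
    - apply he; congruence.
    - apply Tdec in Hn. rewrite Hn in E. symmetry in E. apply decT in E. contradiction.
    - apply Tdec in Hm. rewrite Hm in E. apply decT in E. contradiction.
    - assert (e n = y). { apply NNPP; intro; apply H; exists (e n); auto. }
      assert (e m = y). { apply NNPP; intro; apply H; exists (e m); auto. }
      apply he; congruence. }
  exists (fun s => match s with inl x => fun z => dec (z = x) | inr x => fun z => dec (z <> x) end).
  intros [x|x] [y|y] E.
  - assert (E1 := equal_f E x). simpl in E1.
    assert (dec (x = x) = true) by (apply Tdec; auto). rewrite E1 in H. apply decT in H. congruence.
  - destruct (three x y) as [z [zx zy]]. assert (E1 := equal_f E z). simpl in E1.
    assert (dec (z = x) = false) by (apply Fdec; auto). rewrite E1 in H. apply decF in H. contradiction.
  - destruct (three x y) as [z [zx zy]]. assert (E1 := equal_f E z). simpl in E1.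
    assert (dec (z <> x) = true) by (apply Tdec; auto). rewrite E1 in H. apply decT in H. contradiction.
  - assert (E1 := equal_f E x). simpl in E1.
    assert (dec (x <> x) = false) by (apply Fdec; auto). rewrite E1 in H. apply decF in H.
    f_equal. apply NNPP; intro; apply H; congruence.
Qed.

Definition choose {B : Type} (d : B) (P : B -> Prop) : B :=
  match excluded_middle_informative (exists b, P b) with
  | left H => proj1_sig (constructive_indefinite_description _ H)
  | right _ => d end.
Lemma choose_spec {B : Type} (d : B) (P : B -> Prop) : (exists b, P b) -> P (choose d P).
Proof.
  intro H. unfold choose. destruct (excluded_middle_informative (exists b, P b)); [|contradiction].
  exact (proj2_sig (constructive_indefinite_description _ e)).
Qed.

Lemma wf_rec (T X : Type) (lt : T -> T -> Prop) (wf : well_founded lt) (d : X)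
  (G : T -> (T -> X) -> X)
  (Gext : forall x f g, (forall y, lt y x -> f y = g y) -> G x f = G x g) :
  exists h : T -> X, forall x, h x = G x h.
Proof.
  pose (F := fun x (rec : forall y, lt y x -> X) => G x (fun y =>
     match excluded_middle_informative (lt y x) with left p => rec y p | right _ => d end)).
  exists (Fix wf (fun _ => X) F). intro x.
  rewrite Fix_eq.
  - unfold F at 1. apply Gext. intros y Hy.
    destruct (excluded_middle_informative (lt y x)); [reflexivity| contradiction].
  - intros z f g Hfg. unfold F. f_equal. extensionality y.
    destruct (excluded_middle_informative (lt y z)); auto.
Qed.

Lemma wf_min (T : Type) (lt : T -> T -> Prop) : well_founded lt ->
  forall Q : T -> Prop, (exists x, Q x) -> exists x, Q x /\ forall y, lt y x -> ~ Q y.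
Proof.
  intros wf Q [x Hx]. apply NNPP; intro H. revert Hx.
  induction x as [x IH] using (well_founded_ind wf). intro Hx.
  apply H. exists x. split; [exact Hx|]. intros y Hy Qy. exact (IH y Hy Qy).
Qed.

Lemma wo_compare (A B : Type) (lt : A -> A -> Prop) :
  well_founded lt -> (forall x y, x <> y -> lt x y \/ lt y x) ->
  le_card A B \/ exists a, le_card B (sub (fun a' => lt a' a)).
Proof.
  intros wf tot.
  destruct (classic (exists b : B, True)) as [[b0 _]|nB].
  2:{ destruct (classic (exists a : A, True)) as [[a _]|nA].
      - right. exists a. exists (fun b => False_rect _ (nB (ex_intro _ b I))). intros x. contradiction nB; eauto.
      - left. exists (fun a => False_rect _ (nA (ex_intro _ a I))). intros x. contradiction nA; eauto. }
  pose (G := fun a (h : A -> B) => choose b0 (fun b => forall a', lt a' a -> h a' <> b)).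
  destruct (wf_rec A B lt wf b0 G) as [h Hh].
  { intros x f g Hfg. unfold G. f_equal. extensionality b. apply propositional_extensionality.
    split; intros H a' Ha'; [rewrite <- Hfg|rewrite Hfg]; auto. }
  destruct (classic (forall a, exists b, forall a', lt a' a -> h a' <> b)) as [Hall|Hn].
  - left. exists h. intros x y E. apply NNPP; intro nxy.
    destruct (tot x y nxy) as [H|H].
    + assert (S := choose_spec b0 _ (Hall y)). cbv beta in S.
      assert (Hy := Hh y); unfold G in Hy. rewrite <- Hy in S. exact (S x H E).
    + assert (S := choose_spec b0 _ (Hall x)). cbv beta in S.
      assert (Hy := Hh x); unfold G in Hy. rewrite <- Hy in S. exact (S y H (eq_sym E)).
  - right. apply not_all_ex_not in Hn. destruct Hn as [a Ha]. exists a.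
    apply le_of_rel with (R := fun b (s : sub (fun a' => lt a' a)) => h (proj1_sig s) = b).
    + intro b. apply NNPP; intro H. apply Ha. exists b. intros a' Ha' E. apply H.
      exists (exist _ a' Ha'). exact E.
    + intros; congruence.
Qed.

Lemma cmp (A B : Type) : le_card A B \/ le_card B A.
Proof.
  destruct (wo_exists A) as [lt [wf [tot _]]].
  destruct (wo_compare A B lt wf tot) as [H|[a H]]; [left; auto|right].
  eapply le_trans; [exact H|]. exists (@proj1_sig _ _). intros x y; apply proj_inj.
Qed.

Lemma union_small K (J T : Type) (G : J -> set T) : regular_card K -> lt_card J K ->
  (forall j, ~ le_card K (sub (G j))) -> ~ le_card K (sub (fun x => exists j, G j x)).
Proof.
  intros [_ [_ cof]] HJ HG [e He]. apply (cof J HJ).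
  exists (fun j k => G j (proj1_sig (e k))). split.
  - intro j. split.
    + exists (@proj1_sig _ _). intros x y; apply proj_inj.
    + intros [f Hf]. apply (HG j).
      exists (fun k => exist _ (proj1_sig (e (proj1_sig (f k)))) (proj2_sig (f k))).
      intros x y E. apply Hf. apply proj_inj. apply He. apply proj_inj. simpl in E.
      injection E; auto.
  - intro k. destruct (proj2_sig (e k)) as [j Hj]. exists j. exact Hj.
Qed.

Lemma small_mono K T (A B : set T) : (forall x, A x -> B x) -> ~ le_card K (sub B) -> ~ le_card K (sub A).
Proof.
  intros HAB nB [f hf]. apply nB. exists (fun k => exist _ (proj1_sig (f k)) (HAB _ (proj2_sig (f k)))).
  intros x y E. apply hf. apply proj_inj. injection E; auto.
Qed.

Lemma nd_by_ext K M (N : set (M -> bool)) :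
  (forall f (D : set M), lt_card (sub D) K -> exists g W, (forall x, D x -> g x = f x) /\
     box_open K M W /\ W g /\ (forall h, W h -> ~ N h)) -> box_nowhere_dense K M N.
Proof.
  intros H U HU Hcl f Uf. destruct (HU f Uf) as [D [HD HDU]].
  destruct (H f D HD) as [g [W [Hg [HW [Wg WN]]]]].
  assert (Ug : U g) by (apply HDU; exact Hg).
  destruct (Hcl g Ug W HW Wg) as [h [Wh Nh]]. exact (WN h Wh Nh).
Qed.

Lemma nd_mono K M (N N' : set (M -> bool)) : (forall g, N g -> N' g) ->
  box_nowhere_dense K M N' -> box_nowhere_dense K M N.
Proof.
  intros HNN' HN' U HU Hcl. apply (HN' U HU). intros f Uf W HW Wf.
  destruct (Hcl f Uf W HW Wf) as [g [Wg Ng]]. eauto.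
Qed.

Lemma nd_empty K M : box_nowhere_dense K M (fun _ => False).
Proof.
  intros U HU Hcl f Uf. destruct (Hcl f Uf U HU Uf) as [g [_ []]].
Qed.

Lemma inf_of_reg K : regular_card K -> infinite_card K.
Proof. intros [H _]; exact H. Qed.

Lemma nd_single K M (f0 : M -> bool) : regular_card K -> lt_card K M ->
  box_nowhere_dense K M (fun g => g = f0).
Proof.
  intros HK [_ nMK]. apply nd_by_ext. intros f D HD.
  assert (Hx : exists x, ~ D x).
  { apply NNPP; intro Hn. apply nMK. eapply le_trans; [|exact (proj1 HD)].
    exists (fun x => exist D x (NNPP _ (fun nD => Hn (ex_intro _ x nD)))).
    intros x y E. injection E; auto. }
  destruct Hx as [x nDx].
  exists (fun z => if excluded_middle_informative (z = x) then negb (f0 x) else f z),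
         (fun h => h x = negb (f0 x)).
  split; [|split; [|split]].
  - intros z Dz. destruct (excluded_middle_informative (z = x)); [subst; contradiction|auto].
  - intros h Wh. exists (fun z => z = x). split.
    + apply lt_of_le_bool; [apply inf_of_reg; auto|]. exists (fun _ => true).
      intros a b _. apply proj_inj. rewrite (proj2_sig a), (proj2_sig b). auto.
    + intros g Hg. rewrite (Hg x eq_refl). auto.
  - simpl. destruct (excluded_middle_informative (x = x)); [auto|contradiction].
  - intros h Wh E. subst h. destruct (f0 x); discriminate.
Qed.

Definition Cset (M : Type) (V : set (M -> bool)) : set (M -> bool) :=
  fun g => forall x y, (forall v : sub V, proj1_sig v x = proj1_sig v y) -> g x = g y.

Lemma V_sub_C M (V : set (M -> bool)) g : V g -> Cset M V g.
Proof. intros Vg x y H. exact (H (exist _ g Vg)). Qed.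

Lemma nd_C K M (V : set (M -> bool)) : regular_card K -> le_card K (sub V) ->
  lt_card (sub V -> bool) M -> box_nowhere_dense K M (Cset M V).
Proof.
  intros HK HKV [_ nM]. apply nd_by_ext. intros f D HD.
  assert (Hinf : le_card nat (sub V)) by (eapply le_trans; [apply inf_of_reg; exact HK|exact HKV]).
  assert (Hxy : exists x y, ~ D x /\ ~ D y /\ x <> y /\
                  forall v : sub V, proj1_sig v x = proj1_sig v y).
  { apply NNPP; intro Hn. apply nM.
    destruct HD as [[d Hd] _]. destruct HKV as [t Ht].
    pose proof Hinf as [e0 _].
    pose (dd := fun x => match excluded_middle_informative (D x) with
                 | left p => t (d (exist _ x p)) | right _ => e0 0 end).
    assert (dd_inj : forall x y, D x -> D y -> dd x = dd y -> x = y).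
    { intros x y Dx Dy. unfold dd.
      destruct (excluded_middle_informative (D x)); [|contradiction].
      destruct (excluded_middle_informative (D y)); [|contradiction].
      intro E. apply Ht in E. apply Hd in E. injection E; auto. }
    eapply le_trans; [|apply pow_mono, opt_inf; exact Hinf].
    exists (fun x (o : option (sub V)) => match o with
             | None => dec (D x)
             | Some v => if dec (D x) then dec (v = dd x) else proj1_sig v x end).
    intros x y Exy.
    assert (E0 := equal_f Exy None). simpl in E0.
    destruct (classic (D x)) as [Dx|nDx].
    - assert (Dy : D y). { apply decT. rewrite <- E0. apply Tdec; auto. }
      assert (E1 := equal_f Exy (Some (dd x))). simpl in E1.
      rewrite (Tdec _ Dx), (Tdec _ Dy) in E1. rewrite (Tdec (dd x = dd x) eq_refl) in E1.
      symmetry in E1. apply decT in E1. apply dd_inj; auto.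
    - assert (nDy : ~ D y). { apply decF. rewrite <- E0. apply Fdec; auto. }
      apply NNPP; intro nxy. apply Hn. exists x, y. split; [auto|split; [auto|split; [auto|]]].
      intro v. assert (E1 := equal_f Exy (Some v)). simpl in E1.
      rewrite (Fdec _ nDx), (Fdec _ nDy) in E1. exact E1. }
  destruct Hxy as [x [y [nDx [nDy [nxy Hcol]]]]].
  exists (fun z => if dec (z = x) then true else if dec (z = y) then false else f z),
         (fun h => h x = true /\ h y = false).
  split; [|split; [|split]].
  - intros z Dz. assert (z <> x) by (intro; subst; contradiction).
    assert (z <> y) by (intro; subst; contradiction).
    rewrite (Fdec _ H), (Fdec _ H0). auto.
  - intros h [Hx Hy]. exists (fun z => z = x \/ z = y). split.
    + apply lt_of_le_bool; [apply inf_of_reg; auto|].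
      exists (fun s => dec (proj1_sig s = x)). intros [a Ha] [b Hb] E. apply proj_inj. simpl in *.
      destruct Ha as [Ha|Ha]; destruct Hb as [Hb|Hb]; subst; auto.
      * rewrite (Tdec (x = x) eq_refl) in E. symmetry in E. apply decT in E. auto.
      * rewrite (Tdec (x = x) eq_refl) in E. apply decT in E. auto.
    + intros g Hg. rewrite (Hg x (or_introl eq_refl)), (Hg y (or_intror eq_refl)). auto.
  - simpl. rewrite (Tdec (x = x) eq_refl). split; auto.
    assert (y <> x) by auto. rewrite (Fdec _ H), (Tdec (y = y) eq_refl). auto.
  - intros h [Hx Hy] Ch. rewrite (Ch x y Hcol) in Hx. congruence.
Qed.

Lemma le_unit K : regular_card K -> le_card unit K.
Proof. intro HK. eapply le_trans; [|apply inf_of_reg; exact HK]. exists (fun _ => 0). intros [] [] _; auto. Qed.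

Lemma part1a K M L : regular_card K -> lt_card K M -> lt_card (L -> bool) M -> lt_non K M L.
Proof.
  intros HK HKM HLM S HS. destruct (cmp (sub S) K) as [HSK|HKS].
  - exists (sub S), (fun i g => g = proj1_sig i). split; [exact HSK|split].
    + intro i. apply nd_single; auto.
    + intro f. split.
      * intro Sf. exists (exist _ f Sf). reflexivity.
      * intros [i Hi]. subst. exact (proj2_sig i).
  - exists unit, (fun _ g => S g). split; [apply le_unit; auto|split].
    + intros _. apply nd_mono with (N' := Cset M S); [apply V_sub_C|].
      apply nd_C; auto. eapply lt_le_trans; [apply pow_mono; exact HS|exact HLM].
    + intro f; split; [intro; exists tt; auto|intros [_ H]; auto].
Qed.

Lemma lt_sum K M A : regular_card K -> lt_card K M -> strong_limit M -> lt_card A M ->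
  lt_card (A + K) M.
Proof.
  intros HK HKM SL HAM. destruct (cmp A K) as [HAK|HKA].
  - eapply lt_le_trans; [|exact (SL K HKM)].
    eapply le_trans; [apply sum_mono; [exact HAK|apply le_refl]|].
    apply sum_pow. apply inf_of_reg; auto.
  - eapply lt_le_trans; [|exact (SL A HAM)].
    eapply le_trans; [apply sum_mono; [apply le_refl|exact HKA]|].
    apply sum_pow. eapply le_trans; [apply inf_of_reg; exact HK|exact HKA].
Qed.

Lemma part1b K M : regular_card K -> lt_card K M -> cof_eq M K -> strong_limit M -> lt_non K M M.
Proof.
  intros HK HKM [[F [HF Hcov]] _] SL S [j Hj].
  pose proof HKM as [[iota Hiota] nMK].
  pose (delta := fun k => fun x => dec (x = iota k)).
  assert (delta_inj : forall k k', delta k = delta k' -> k = k').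
  { intros k k' E. assert (E1 := equal_f E (iota k)). unfold delta in E1.
    rewrite (Tdec (iota k = iota k) eq_refl) in E1. symmetry in E1. apply decT in E1. auto. }
  pose (T := fun g => exists k, g = delta k).
  pose (V := fun k g => (exists h : S g, F k (j (exist _ g h))) \/ T g).
  exists K, (fun k g => S g /\ Cset M (V k) g). split; [apply le_refl|split].
  - intro k. apply nd_mono with (N' := Cset M (V k)); [intros g [_ H]; exact H|].
    apply nd_C; auto.
    + exists (fun k' => exist (V k) (delta k') (or_intror (ex_intro _ k' eq_refl))).
      intros a b E. apply delta_inj. injection E; auto.
    + apply lt_le_trans with (B := ((sub (F k) + K) -> bool)%type);
        [apply pow_mono|apply (SL (sub (F k) + K)%type); apply lt_sum; auto].
      apply le_of_rel with (R := fun (v : sub (V k)) (s : sub (F k) + K) => match s with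
        | inl a => exists h : S (proj1_sig v), proj1_sig a = j (exist _ (proj1_sig v) h)
        | inr k' => proj1_sig v = delta k' end).
      * intros [g Vg]. simpl. destruct Vg as [[h Fh]|[k' Hk']].
        -- exists (inl (exist _ (j (exist _ g h)) Fh)). exists h. reflexivity.
        -- exists (inr k'). exact Hk'.
      * intros [g Vg] [g' Vg'] [a|k'] Ha Ha'; apply proj_inj; simpl in *.
        -- destruct Ha as [h Ha], Ha' as [h' Ha']. rewrite Ha in Ha'. apply Hj in Ha'.
           injection Ha'; auto.
        -- congruence.
  - intro f. split.
    + intro Sf. destruct (Hcov (j (exist _ f Sf))) as [k Hk]. exists k. split; auto.
      apply V_sub_C. left. exists Sf. exact Hk.
    + intros [k [H _]]; exact H.
Qed.

Definition dom {M : Type} (t : set (M * bool)) : set M := fun x => exists b, t (x, b).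
Definition funct {M : Type} (t : set (M * bool)) := forall x b b', t (x, b) -> t (x, b') -> b = b'.
Definition extb {M : Type} (t : set (M * bool)) (g : M -> bool) := forall x b, t (x, b) -> g x = b.
Definition incl {A : Type} (s t : set A) := forall z, s z -> t z.

Lemma extend K M (N : set (M -> bool)) (t : set (M * bool)) : regular_card K ->
  box_nowhere_dense K M N -> funct t -> ~ le_card K (sub (dom t)) ->
  exists t', incl t t' /\ funct t' /\ ~ le_card K (sub (dom t')) /\ forall g, extb t' g -> ~ N g.
Proof.
  intros HK HN Ft St.
  assert (Lt : le_card (sub (dom t)) K) by (destruct (cmp (sub (dom t)) K); [auto|contradiction]).
  pose (f0 := fun x => dec (t (x, true))).
  assert (Ef0 : extb t f0).
  { intros x b H. destruct b. apply Tdec; auto. apply Fdec. intro H'. specialize (Ft x _ _ H H'). discriminate. }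
  assert (Hopen : box_open K M (extb t)).
  { intros f Hf. exists (dom t). split; [split; auto|].
    intros g Hg x b Hxb. rewrite (Hg x (ex_intro _ b Hxb)). apply Hf; auto. }
  assert (Hex : exists f, extb t f /\ ~ box_closure K M N f).
  { apply NNPP; intro H. apply (HN _ Hopen) with (f := f0); auto.
    intros f Hf. apply NNPP; intro. apply H; eauto. }
  destruct Hex as [f [Hf nC]]. unfold box_closure in nC. apply not_all_ex_not in nC.
  destruct nC as [W HW]. apply imply_to_and in HW. destruct HW as [HWo HW].
  apply imply_to_and in HW. destruct HW as [Wf HnoN].
  destruct (HWo f Wf) as [D' [HD' HD'W]].
  exists (fun z => (dom t (fst z) \/ D' (fst z)) /\ snd z = f (fst z)).
  split; [|split; [|split]].
  - intros [x b] H. split; simpl. left; exists b; auto. symmetry; apply Hf; auto.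
  - intros x b b' [_ H1] [_ H2]; simpl in *; congruence.
  - apply small_mono with (B := fun x => exists j : bool, (if j then dom t else D') x).
    + intros x [b [H _]]. simpl in H. destruct H; [exists true| exists false]; auto.
    + apply union_small; auto.
      * apply lt_of_le_bool; [apply inf_of_reg; auto|apply le_refl].
      * intros []; [exact St|exact (proj2 HD')].
  - intros g Hg Ng. apply HnoN. exists g. split; [|exact Ng]. apply HD'W. intros x Dx.
    apply (Hg x (f x)). split; simpl; auto.
Qed.

Lemma baire_core K M (I : Type) (N : I -> set (M -> bool)) : regular_card K -> le_card I K ->
  (forall i, box_nowhere_dense K M (N i)) ->
  exists s : set (M * bool), funct s /\ le_card (sub (dom s)) K /\
    forall g, extb s g -> forall i, ~ N i g.
Proof.
  intros HK HI HN.
  destruct (wo_exists K) as [lt [wf [tot [trans irr]]]].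
  pose (P := fun k => ~ le_card K (sub (fun q => lt q k))).
  assert (Pdown : forall q k, lt q k -> P k -> P q).
  { intros q k Hqk Pk. apply (small_mono K K (fun q' => lt q' q) (fun q' => lt q' k)); auto.
    intros; eapply trans; eauto. }
  assert (KP : le_card K (sub P)).
  { destruct (classic (forall k, P k)) as [Hall|Hn].
    - exists (fun k => exist P k (Hall k)). intros x y E; injection E; auto.
    - apply not_all_ex_not in Hn. destruct (wf_min K lt wf (fun k => ~ P k) Hn) as [k0 [nP0 Hmin]].
      unfold P in nP0. apply NNPP in nP0. eapply le_trans; [exact nP0|].
      exists (fun q => exist P (proj1_sig q) (NNPP _ (Hmin _ (proj2_sig q)))).
      intros x y E. apply proj_inj. injection E; auto. }
  assert (HIP : le_card I (sub P)) by (eapply le_trans; eauto).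
  destruct HIP as [e0 He0].
  pose (e := fun i => proj1_sig (e0 i)).
  assert (Pe : forall i, P (e i)) by (intro i; exact (proj2_sig (e0 i))).
  assert (e_inj : forall i i', e i = e i' -> i = i') by (intros; apply He0, proj_inj; auto).
  pose (N' := fun k g => exists i, e i = k /\ N i g).
  assert (HN' : forall k, box_nowhere_dense K M (N' k)).
  { intro k. destruct (classic (exists i, e i = k)) as [[i Hi]|Hn].
    - apply nd_mono with (N' := N i); [|apply HN]. intros g [i' [Hi' Ng]].
      assert (i' = i) by (apply e_inj; congruence). subst; auto.
    - apply nd_mono with (N' := fun _ => False); [|apply nd_empty]. intros g [i [Hi _]]. apply Hn; eauto. }
  pose (good := fun (t : set (M * bool)) => funct t /\ ~ le_card K (sub (dom t))).
  pose (spec := fun k (t t' : set (M * bool)) => incl t t' /\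
                 (good t -> good t' /\ forall g, extb t' g -> ~ N' k g)).
  assert (spec_ex : forall k t, exists t', spec k t t').
  { intros k t. destruct (classic (good t)) as [[Ft St]|ng].
    - destruct (extend K M (N' k) t HK (HN' k) Ft St) as [t' [H1 [H2 [H3 H4]]]].
      exists t'. split; auto. intros _. split; [split|]; auto.
    - exists t. split. intros z; auto. intro; contradiction. }
  pose (Un := fun k (rec : K -> set (M * bool)) => fun z => exists q, lt q k /\ rec q z).
  pose (G := fun k rec => choose (Un k rec) (spec k (Un k rec))).
  destruct (wf_rec K (set (M * bool)) lt wf (fun _ => False) G) as [s Hs].
  { intros k f g Hfg. unfold G. assert (E : Un k f = Un k g).
    { unfold Un. extensionality z. apply propositional_extensionality.
      split; intros [q [Hq H]]; exists q; split; auto; [rewrite <- Hfg | rewrite Hfg]; auto. }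
    rewrite E. reflexivity. }
  assert (Sspec : forall k, spec k (Un k s) (s k)).
  { intro k. rewrite (Hs k). unfold G. apply choose_spec. apply spec_ex. }
  assert (chain : forall q k, lt q k -> incl (s q) (s k)).
  { intros q k Hqk z Hz. apply (proj1 (Sspec k)). exists q; auto. }
  assert (funU : forall (Q : K -> Prop), (forall k, Q k -> funct (s k)) ->
                   funct (fun z => exists q, Q q /\ s q z)).
  { intros Q HQ x b b' [q [Qq Hq]] [q' [Qq' Hq']]. destruct (classic (q = q')) as [E|nE].
    - subst. eapply HQ; eauto.
    - destruct (tot q q' nE) as [H|H].
      + apply (HQ q' Qq' x b b'); auto. apply (chain q q' H); auto.
      + apply (HQ q Qq x b b'); auto. apply (chain q' q H); auto. }
  assert (Main : forall k, P k -> good (s k) /\ forall g, extb (s k) g -> ~ N' k g).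
  { intro k. induction k as [k IH] using (well_founded_ind wf). intro Pk.
    apply (proj2 (Sspec k)). split.
    - apply funU. intros q Hq. exact (proj1 (proj1 (IH q Hq (Pdown q k Hq Pk)))).
    - apply small_mono with (B := fun x => exists j : sub (fun q => lt q k), dom (s (proj1_sig j)) x).
      + intros x [b [q [Hq Hs']]]. exists (exist _ q Hq). exists b. exact Hs'.
      + apply union_small; auto.
        * split; [|exact Pk]. exists (@proj1_sig _ _). intros a b; apply proj_inj.
        * intros [q Hq]. simpl. exact (proj2 (proj1 (IH q Hq (Pdown q k Hq Pk)))). }
  pose (sfin := fun z => exists k, P k /\ s k z).
  exists sfin. split; [apply funU; intros k Pk; exact (proj1 (proj1 (Main k Pk)))|split].
  2:{ intros g Hg i Ng. destruct (Main (e i) (Pe i)) as [_ H]. apply (H g).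
      - intros x b Hxb. apply Hg. exists (e i). split; auto.
      - exists i; auto. }
  assert (Hp : forall a : sub (dom sfin), exists k, P k /\ dom (s k) (proj1_sig a)).
  { intros [x [b [k [Pk Hk]]]]. exists k. split; auto. exists b; auto. }
  pose (pidx := fun a => proj1_sig (constructive_indefinite_description _ (Hp a))).
  assert (Hpidx : forall a, P (pidx a) /\ dom (s (pidx a)) (proj1_sig a))
    by (intro a; exact (proj2_sig (constructive_indefinite_description _ (Hp a)))).
  destruct (wo_exists M) as [ltM [wfM [totM _]]].
  pose (lex := fun a a' : sub (dom sfin) => lt (pidx a) (pidx a') \/
                 (pidx a = pidx a' /\ ltM (proj1_sig a) (proj1_sig a'))).
  assert (wfl : well_founded lex).
  { assert (H : forall k a, pidx a = k -> Acc lex a).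
    { intro k. induction k as [k IHk] using (well_founded_ind wf).
      assert (H2 : forall x a, proj1_sig a = x -> pidx a = k -> Acc lex a).
      { intro x. induction x as [x IHx] using (well_founded_ind wfM).
        intros a Ha Hk. constructor. intros a' [H1|[H1 H2]].
        - apply (IHk (pidx a')); auto. rewrite <- Hk; auto.
        - apply (IHx (proj1_sig a')); auto. rewrite <- Ha; auto. congruence. }
      intros a Hk. apply (H2 (proj1_sig a) a eq_refl Hk). }
    intro a. apply (H (pidx a) a eq_refl). }
  assert (totl : forall a a', a <> a' -> lex a a' \/ lex a' a).
  { intros a a' na. destruct (classic (pidx a = pidx a')) as [E|nE].
    - assert (proj1_sig a <> proj1_sig a') by (intro E'; apply na; apply proj_inj; auto).
      destruct (totM _ _ H) as [H'|H']; [left|right]; right; auto.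
    - destruct (tot _ _ nE); [left|right]; left; auto. }
  destruct (wo_compare _ K lex wfl totl) as [H|[a Ha]]; [exact H|].
  exfalso. destruct (Hpidx a) as [Pa Da]. destruct (Main _ Pa) as [[_ Sa] _]. apply Sa.
  eapply le_trans; [exact Ha|].
  apply le_of_rel with (R := fun (a' : sub (fun a' => lex a' a)) (y : sub (dom (s (pidx a)))) =>
                               proj1_sig y = proj1_sig (proj1_sig a')).
  - intros [a' Ha']. simpl. destruct (Hpidx a') as [_ [b Hb]].
    assert (Hd : dom (s (pidx a)) (proj1_sig a')).
    { exists b. destruct Ha' as [H1|[H1 _]]. apply (chain _ _ H1); auto. rewrite <- H1; auto. }
    exists (exist _ _ Hd). reflexivity.
  - intros a1 a2 y E1 E2. apply proj_inj. apply proj_inj. congruence.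
Qed.

Lemma part2 K M L : regular_card K -> regular_card L ->
  (exists X : set (set L), eq_card (sub X) M /\ (forall Y, X Y -> eq_card (sub Y) L) /\
     independent_le K L X) -> non_le K M L.
Proof.
  intros HK HL [X [[fX [HfXi HfXs]] [_ Hind]]].
  pose (enum := fun xi => proj1_sig (proj1_sig (constructive_indefinite_description _ (HfXs xi)))).
  assert (enumX : forall xi, X (enum xi))
    by (intro xi; exact (proj2_sig (proj1_sig (constructive_indefinite_description _ (HfXs xi))))).
  assert (enum_inj : forall xi xi', enum xi = enum xi' -> xi = xi').
  { intros xi xi' E. unfold enum in E.
    destruct (constructive_indefinite_description _ (HfXs xi)) as [a Ha].
    destruct (constructive_indefinite_description _ (HfXs xi')) as [a' Ha'].
    simpl in E. apply proj_inj in E. subst. reflexivity. }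
  pose (Gl := fun l xi => dec (enum xi l)).
  exists (fun g => exists l, g = Gl l). split.
  - apply le_of_rel with (R := fun g l => proj1_sig g = Gl l).
    + intros [g [l Hl]]; exists l; auto.
    + intros; apply proj_inj; congruence.
  - intros [I [N [HI [HN Hiff]]]].
    destruct (baire_core K M I N HK HI HN) as [s [Fs [[h Hh] Hext]]].
    assert (Hb : forall b, le_card (sub (fun Y => exists xi, s (xi, b) /\ Y = enum xi)) K).
    { intro b. apply le_of_rel with (R := fun Y k => exists xi (H : dom s xi),
         s (xi, b) /\ proj1_sig Y = enum xi /\ k = h (exist _ xi H)).
      - intros [Y [xi [H1 H2]]]. exists (h (exist _ xi (ex_intro _ b H1))).
        exists xi, (ex_intro _ b H1). auto.
      - intros Y Y' k [xi [H [H1 [H2 H3]]]] [xi' [H' [H1' [H2' H3']]]].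
        rewrite H3 in H3'. apply Hh in H3'. apply (f_equal (@proj1_sig _ _)) in H3'.
        simpl in H3'. apply proj_inj. congruence. }
    destruct (Hind (fun Y => exists xi, s (xi, true) /\ Y = enum xi)
                   (fun Y => exists xi, s (xi, false) /\ Y = enum xi)) as [phi [_ phis]].
    + intros Y [xi [_ E]]; subst; auto.
    + intros Y [xi [_ E]]; subst; auto.
    + intros Y [xi [H1 E1]] [xi' [H2 E2]]. subst. apply enum_inj in E2. subst.
      specialize (Fs _ _ _ H1 H2). discriminate.
    + apply Hb.
    + apply Hb.
    + destruct HL as [[nL HnL] _]. destruct (phis (nL 0)) as [[l [HlA HlB]] _].
      assert (Sl : exists l', Gl l = Gl l') by eauto.
      apply Hiff in Sl. destruct Sl as [i Ni]. refine (Hext (Gl l) _ i Ni).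
      intros xi b Hxb. unfold Gl. destruct b.
      * apply Tdec. apply HlA. exists xi; auto.
      * apply Fdec. intro H. apply HlB. exists (enum xi). split; auto. exists xi; auto.
Qed.

Theorem mainTheorem13 (K M : Type) :
  regular_card K -> lt_card K M -> cof_eq M K ->
  ((forall L : Type, lt_card L (L -> bool) -> lt_card (L -> bool) M -> lt_non K M L)
   /\ (strong_limit M -> lt_non K M M))
  /\
  (forall L : Type, regular_card L -> lt_card K L -> lt_card L M -> le_card M (L -> bool) ->
     (exists X : set (set L),
        eq_card (sub X) M /\
        (forall Y, X Y -> eq_card (sub Y) L) /\
        independent_le K L X) ->
     non_le K M L).
Proof.
  intros HK HKM HcofM. split; [split|].
  - intros L _ HLM. apply part1a; auto.
  - intro SL. apply part1b; auto.
  - intros L HL _ _ _ HX. apply part2; auto.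
Qed.
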